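(* Let $n\ge2$. Then $\Gamma^k=\Gamma^{n-k}$ for all $k=1,\dots,n-1$.
   Context: Let $\mathrm{C}$ be either the real Clifford algebra $C\ell_{p,q}$ with $p+q=n$, or the complex Clifford algebra $C\ell(\mathbb{C}^n)$. It has identity $e$ and generators $e_1,\dots,e_n$ satisfying $e_ae_b+e_be_a=2\eta_{ab}e$. In the real case $\eta=\mathrm{diag}(1,\dots,1,-1,\dots,-1)$ with $p$ entries $+1$ and $q$ entries $-1$. In the complex case $\eta=I_n$. $\mathrm{C}^k$ is the grade-$k$ subspace, spanned by the products $e_{a_1}\cdots e_{a_k}$ with $a_1<\dots<a_k$. $\mathrm{C}^\times$ is the group of invertible elements. $\Gamma^k=\{T\in\mathrm{C}^\times: T\,\mathrm{C}^k\,T^{-1}\subseteq\mathrm{C}^k\}$. *)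

(* Defs.v *)
From mathcomp Require Import all_boot all_algebra.
From mathcomp Require Import reals.
From mathcomp.real_closed Require Import complex.
Set Implicit Arguments. Unset Strict Implicit. Unset Printing Implicit Defensive.
Import GRing.Theory Num.Theory.
Local Open Scope ring_scope.

(* Concrete model of the Clifford algebra generated by e_0,...,e_{n-1}
   (0-indexed) with e_a e_b + e_b e_a = 2 eta_a delta_ab e, over a field F.
   An element is its coordinate vector in the blade basis
   e_A = e_{a1} ... e_{ak}  (A = {a1 < ... < ak}), e_{empty} = e. *)
Definition cl (F : fieldType) (n : nat) := {ffun {set 'I_n} -> F}.

Section Clifford.
Variables (F : fieldType) (n : nat) (eta : 'I_n -> F).

(* e_A e_B = bsign A B e_{A symmetric-difference B} *)
Definition bsign (A B : {set 'I_n}) : F :=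
  (-1) ^+ #|[set ab : 'I_n * 'I_n | [&& ab.1 \in A, ab.2 \in B & (ab.2 < ab.1)%N]]|
  * \prod_(i in A :&: B) eta i.

Definition symdiff (A B : {set 'I_n}) : {set 'I_n} := (A :\: B) :|: (B :\: A).

Definition clone : cl F n := [ffun A => if A == set0 then 1 else 0].

Definition clmul (X Y : cl F n) : cl F n :=
  [ffun C => \sum_(A : {set 'I_n}) \sum_(B : {set 'I_n})
      (if symdiff A B == C then X A * Y B * bsign A B else 0)].

Definition grade (k : nat) (X : cl F n) : Prop :=
  forall A : {set 'I_n}, #|A| != k -> X A = 0.

Definition clinverse (T S : cl F n) : Prop :=
  clmul T S = clone /\ clmul S T = clone.

Definition Gamma (k : nat) (T : cl F n) : Prop :=
  exists S, clinverse T S /\ forall X, grade k X -> grade k (clmul (clmul T X) S).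
End Clifford.

Definition eta_pq (R : realType) (p q : nat) (i : 'I_(p + q)) : R :=
  if (i < p)%N then 1 else -1.

Definition eta_C (R : realType) (n : nat) (i : 'I_n) : R[i] := 1.

(* Main.v *)
Require Import Defs.
From mathcomp Require Import all_boot all_algebra.
From mathcomp Require Import reals.
From mathcomp.real_closed Require Import complex.
From mathcomp Require Import ring zify.
Set Implicit Arguments. Unset Strict Implicit. Unset Printing Implicit Defensive.
Import GRing.Theory Num.Theory.
Local Open Scope ring_scope.

Lemma exists_subset (T : finType) (U : {set T}) m :
  (m <= #|U|)%N -> exists V : {set T}, V \subset U /\ #|V| = m.
Proof.
elim: m => [|m IH] H; first by exists set0; rewrite sub0set cards0.
have [V [HV Hc]] := IH (ltnW H).
have : V \proper U by rewrite properEcard HV Hc.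
case/properP => _ [x Hx HxV].
exists (x |: V); rewrite cardsU1 HxV Hc add1n; split => //.
by rewrite subUset sub1set Hx HV.
Qed.

Section Gen.
Variables (F : fieldType) (n : nat) (eta : 'I_n -> F).
Hypothesis eta2 : forall i, eta i * eta i = 1.
Hypothesis two : (2%:R : F) != 0.

Local Notation mul := (clmul eta).
Local Notation s := (bsign eta).
Local Notation sd := (@symdiff n).

Definition sgnb (b : bool) : F := if b then -1 else 1.

Lemma in_symdiff (A B : {set 'I_n}) x : (x \in sd A B) = (x \in A) (+) (x \in B).
Proof. by rewrite /symdiff !inE; case: (x \in A); case: (x \in B). Qed.

Lemma sdC A B : sd A B = sd B A.
Proof. by apply/setP => x; rewrite !in_symdiff addbC. Qed.
Lemma sdA A B C : sd A (sd B C) = sd (sd A B) C.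
Proof. by apply/setP => x; rewrite !in_symdiff addbA. Qed.
Lemma sdK A B : sd A (sd A B) = B.
Proof. by apply/setP => x; rewrite !in_symdiff addKb. Qed.
Lemma sdKr A B : sd (sd A B) B = A.
Proof. by apply/setP => x; rewrite !in_symdiff addbK. Qed.
Lemma sd0 A : sd set0 A = A.
Proof. by apply/setP => x; rewrite !in_symdiff inE. Qed.
Lemma sdT A : sd setT A = ~: A.
Proof. by apply/setP => x; rewrite !in_symdiff !inE. Qed.
Lemma sd_inj A : injective (sd A).
Proof. by move=> B C H; rewrite -(sdK A B) H sdK. Qed.

Lemma sgn_card (A : {set 'I_n}) : (-1) ^+ #|A| = \prod_i sgnb (i \in A) :> F.
Proof. by rewrite -prodr_const big_mkcond. Qed.

Lemma sgn_cardP (A : {set 'I_n * 'I_n}) : (-1) ^+ #|A| = \prod_p sgnb (p \in A) :> F.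
Proof. by rewrite -prodr_const big_mkcond. Qed.

Lemma sgnbM a b : sgnb (a (+) b) = sgnb a * sgnb b.
Proof. by case: a; case: b; rewrite /sgnb /= ?mulrNN ?mulr1 ?mul1r. Qed.

Lemma sgnb2 a : sgnb a * sgnb a = 1.
Proof. by case: a; rewrite /sgnb ?mulrNN mulr1. Qed.

Lemma sgn_sd A B : (-1) ^+ #|sd A B| = (-1) ^+ #|A| * (-1) ^+ #|B| :> F.
Proof.
rewrite !sgn_card -big_split; apply: eq_bigr => i _.
by rewrite in_symdiff sgnbM.
Qed.

Definition etaP (A B : {set 'I_n}) :=
  \prod_i (if (i \in A) && (i \in B) then eta i else 1).
Definition sgP (A B : {set 'I_n}) :=
  \prod_(p : 'I_n * 'I_n) sgnb [&& p.1 \in A, p.2 \in B & (p.2 < p.1)%N].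

Lemma bsignE A B : s A B = sgP A B * etaP A B.
Proof.
rewrite /bsign sgn_cardP /sgP /etaP; congr (_ * _).
  by apply: eq_bigr => p _; rewrite inE.
by rewrite big_mkcond; apply: eq_bigr => i _; rewrite inE.
Qed.

Lemma cocycle A B C : s A B * s (sd A B) C = s B C * s A (sd B C).
Proof.
rewrite !bsignE.
have HP : sgP A B * sgP (sd A B) C = sgP B C * sgP A (sd B C).
  rewrite /sgP -!big_split; apply: eq_bigr => p _ /=; rewrite !in_symdiff.
  case: (p.1 \in A); case: (p.1 \in B); case: (p.2 \in B); case: (p.2 \in C);
  case: (p.2 < p.1)%N; by rewrite /sgnb /= ?mulrNN ?mulr1 ?mul1r.
have HE : etaP A B * etaP (sd A B) C = etaP B C * etaP A (sd B C).
  rewrite /etaP -!big_split; apply: eq_bigr => i _ /=; rewrite !in_symdiff.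
  by case: (i \in A); case: (i \in B); case: (i \in C); rewrite /= ?mulr1 ?mul1r.
by rewrite mulrACA HP HE mulrACA.
Qed.

Lemma clmulE X Y D : mul X Y D = \sum_A X A * Y (sd A D) * s A (sd A D).
Proof.
rewrite ffunE; apply: eq_bigr => A _.
rewrite (bigD1 (sd A D)) //= sdK eqxx big1 ?addr0 // => B HB.
case: eqP => // HD; move: HB; by rewrite -HD sdK eqxx.
Qed.

Lemma clmulA X Y Z : mul (mul X Y) Z = mul X (mul Y Z).
Proof.
apply/ffunP => D; rewrite !clmulE.
under eq_bigr => C _ do rewrite clmulE.
under eq_bigr => C _ do rewrite big_distrl.
under eq_bigr => C _ do rewrite big_distrl.
rewrite exchange_big /=; apply: eq_bigr => A _.
rewrite (reindex_inj (@sd_inj A)) /= clmulE.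
rewrite big_distrr /= big_distrl /=.
apply: eq_bigr => B _.
rewrite sdK.
have HE2 : sd (sd A B) D = sd B (sd A D) by rewrite [RHS]sdA (sdC B A).
have Hc := cocycle A B (sd B (sd A D)); rewrite sdK in Hc.
rewrite HE2.
transitivity (X A * Y B * Z (sd B (sd A D)) * (s A B * s (sd A B) (sd B (sd A D)))).
  by ring.
by rewrite Hc; ring.
Qed.


Definition blade (B : {set 'I_n}) : cl F n := [ffun C => (C == B)%:R].
Definition sc (c : F) (X : cl F n) : cl F n := [ffun D => c * X D].

Lemma mul_blade_r Y B D : mul Y (blade B) D = Y (sd B D) * s (sd B D) B.
Proof.
rewrite clmulE (bigD1 (sd B D)) //= big1 ?addr0.
  by rewrite ffunE sdKr eqxx mulr1.
move=> A HA; rewrite ffunE; case: eqP; rewrite ?mulr0 ?mul0r // => HD.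
by move: HA; rewrite -HD sdKr eqxx.
Qed.

Lemma mul_blade_l Y B D : mul (blade B) Y D = Y (sd B D) * s B (sd B D).
Proof.
rewrite clmulE (bigD1 B) //= big1 ?addr0.
  by rewrite ffunE eqxx mul1r.
by move=> A HA; rewrite ffunE (negbTE HA) !mul0r.
Qed.

Lemma bsign0l A : s set0 A = 1.
Proof.
rewrite bsignE /sgP /etaP !big1 ?mulr1 // => [i _|p _]; by rewrite inE.
Qed.

Lemma bsign0r A : s A set0 = 1.
Proof.
rewrite bsignE /sgP /etaP !big1 ?mulr1 // => [i _|p _]; by rewrite inE ?andbF.
Qed.

Lemma clone_blade : clone F n = blade set0.
Proof. by apply/ffunP => A; rewrite !ffunE; case: eqP. Qed.

Lemma mul1c X : mul (clone F n) X = X.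
Proof. by apply/ffunP => D; rewrite clone_blade mul_blade_l sd0 bsign0l mulr1. Qed.

Lemma mulc1 X : mul X (clone F n) = X.
Proof. by apply/ffunP => D; rewrite clone_blade mul_blade_r sd0 bsign0r mulr1. Qed.

Lemma mulscl c X Y : mul (sc c X) Y = sc c (mul X Y).
Proof.
apply/ffunP => D; rewrite clmulE [in RHS]ffunE clmulE big_distrr; apply: eq_bigr => A _.
by rewrite ffunE /=; ring.
Qed.

Lemma mulscr c X Y : mul X (sc c Y) = sc c (mul X Y).
Proof.
apply/ffunP => D; rewrite clmulE [in RHS]ffunE clmulE big_distrr; apply: eq_bigr => A _.
by rewrite ffunE /=; ring.
Qed.

Lemma scsc a b X : sc a (sc b X) = sc (a * b) X.
Proof. by apply/ffunP => D; rewrite !ffunE mulrA. Qed.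

Lemma sc1 X : sc 1 X = X.
Proof. by apply/ffunP => D; rewrite !ffunE mul1r. Qed.

Lemma bsign2 A B : s A B * s A B = 1.
Proof.
rewrite bsignE mulrACA /sgP /etaP -!big_split !big1 ?mulr1 // => [i _|p _] /=.
  by case: ifP; rewrite ?mulr1 ?eta2.
exact: sgnb2.
Qed.

Definition alph (m : nat) (X : cl F n) : cl F n :=
  [ffun A : {set 'I_n} => (-1) ^+ (m * #|A|) * X A].

Lemma sgnm_sd m A B : (-1) ^+ (m * #|sd A B|) = (-1) ^+ (m * #|A|) * (-1) ^+ (m * #|B|) :> F.
Proof. by rewrite !(mulnC m) !exprM sgn_sd exprMn. Qed.

Lemma sgnm2 (k : nat) : (-1) ^+ k * (-1) ^+ k = 1 :> F.
Proof. by rewrite -exprD addnn -mul2n exprM sqrrN expr1n expr1n. Qed.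

Lemma alph_mul m X Y : alph m (mul X Y) = mul (alph m X) (alph m Y).
Proof.
apply/ffunP => D; rewrite clmulE [in LHS]ffunE clmulE big_distrr; apply: eq_bigr => A _.
rewrite !ffunE sgnm_sd /=.
transitivity ((-1) ^+ (m * #|D|) * ((-1) ^+ (m * #|A|) * (-1) ^+ (m * #|A|)) * X A * Y (sd A D) * s A (sd A D)).
  by rewrite sgnm2; ring.
ring.
Qed.

Lemma alph_clone m : alph m (clone F n) = clone F n.
Proof.
apply/ffunP => A; rewrite !ffunE; case: eqP => [->|]; last by rewrite mulr0.
by rewrite cards0 muln0 expr0 mulr1.
Qed.

Lemma alphK m X : alph m (alph m X) = X.
Proof. by apply/ffunP => A; rewrite !ffunE mulrA sgnm2 mul1r. Qed.

Lemma alph_sc m c X : alph m (sc c X) = sc c (alph m X).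
Proof. by apply/ffunP => A; rewrite !ffunE; ring. Qed.

Lemma alph_grade m k X : grade k X -> alph m X = sc ((-1) ^+ (m * k)) X.
Proof.
move=> H; apply/ffunP => A; rewrite !ffunE.
case: (eqVneq #|A| k) => [->//|HA]; by rewrite H // !mulr0.
Qed.

Lemma grade_sc k c X : grade k X -> grade k (sc c X).
Proof. by move=> H A HA; rewrite ffunE H // mulr0. Qed.

Lemma grade_blade (B : {set 'I_n}) : grade #|B| (blade B).
Proof. by move=> A HA; rewrite ffunE; case: eqP => // E; rewrite E eqxx in HA. Qed.

Definition swp (p : 'I_n * 'I_n) := (p.2, p.1).
Lemma swp_inj : injective swp.
Proof. by move=> [a b] [c d] [-> ->]. Qed.

Lemma bsign_swap A B : s A B * s B A = (-1) ^+ (#|A| * #|B| + #|A :&: B|).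
Proof.
rewrite !bsignE mulrACA.
have -> : etaP B A = etaP A B.
  by apply: eq_bigr => i _; rewrite andbC.
have -> : etaP A B * etaP A B = 1.
  rewrite /etaP -big_split big1 // => i _ /=; by case: ifP; rewrite ?mulr1 ?eta2.
rewrite mulr1 exprD -cardsX sgn_cardP sgn_card.
have -> : \prod_i sgnb (i \in A :&: B) =
          \prod_(p : 'I_n * 'I_n) sgnb ((p.1 == p.2) && (p.1 \in A :&: B)).
  rewrite -(pair_bigA _ (fun i j => sgnb ((i == j) && (i \in A :&: B)))) /=; apply: eq_bigr => i _.
  rewrite (bigD1 i) //= eqxx big1 ?mulr1 // => j Hj.
  by rewrite eq_sym (negbTE Hj).
rewrite /sgP [X in _ * X](reindex_inj swp_inj) -!big_split; apply: eq_bigr => -[x y] _ /=.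
rewrite !inE.
case: (ltngtP x y) => H /=.
- have -> : (x == y) = false by apply/eqP => E; rewrite E ltnn in H.
  by case: (x \in A); case: (y \in B); rewrite /sgnb /= ?andbF ?mulr1 ?mul1r.
- have -> : (x == y) = false by apply/eqP => E; rewrite E ltnn in H.
  by case: (x \in A); case: (y \in B); rewrite /sgnb /= ?andbF ?mulr1 ?mul1r.
- have E : y = x by apply: val_inj.
  rewrite E eqxx /=.
  by rewrite !andbF !sgnb2.
Qed.

Lemma bsign_comm_odd A B : s A B = s B A -> odd (#|A| * #|B| + #|A :&: B|) -> False.
Proof.
move=> E Ho; have := bsign_swap A B; rewrite -E bsign2.
rewrite -signr_odd Ho expr1 => H.
by move: two; rewrite mulr2n {2}H subrr eqxx.
Qed.

Lemma central_coord W k :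
  (forall B : {set 'I_n}, #|B| = k -> mul W (blade B) = mul (blade B) W) ->
  forall D B : {set 'I_n}, #|B| = k -> odd (#|D| * #|B| + #|D :&: B|) -> W D = 0.
Proof.
move=> H D B HB Ho.
have := congr1 (fun f : cl F n => f (sd B D)) (H B HB) => /=.
rewrite mul_blade_r mul_blade_l !sdK => E.
case: (eqVneq (W D) 0) => // HW; exfalso.
apply: (bsign_comm_odd _ Ho).
by apply: (mulfI HW).
Qed.

Lemma exists_odd_B k (D : {set 'I_n}) : (1 <= k)%N -> (k <= n.-1)%N ->
  D != set0 -> D != setT ->
  exists B : {set 'I_n}, #|B| = k /\ odd (#|D| * #|B| + #|D :&: B|).
Proof.
move=> k1 kn HD0 HDT.
case/set0Pn: HD0 => a Ha.
have [c Hc] : exists c, c \notin D.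
  case: (pickP (fun c => c \notin D)) => [c Hc|Hn]; first by exists c.
  by move: HDT; case/eqP; apply/setP => x; rewrite inE; have := Hn x => /= /negbFE.
have ac : a != c by apply/eqP => E; move: Hc; rewrite -E Ha.
have Hcard : #|~: [set a; c]| = (n - 2)%N.
  by rewrite cardsCs setCK cards2 ac card_ord.
have [V [HV HVc]] := @exists_subset _ (~: [set a; c]) k.-1 ltac:(rewrite Hcard; lia).
have aV : a \notin V.
  by apply/negP => /(subsetP HV); rewrite !inE eqxx.
have cV : c \notin V.
  by apply/negP => /(subsetP HV); rewrite !inE eqxx orbT.
have E1 : D :&: (a |: V) = a |: (D :&: V).
  apply/setP => x; rewrite !inE; case: (eqVneq x a) => [->|] //=; by rewrite Ha.
have E2 : D :&: (c |: V) = D :&: V.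
  apply/setP => x; rewrite !inE; case: (eqVneq x c) => [->|] //=; by rewrite (negbTE Hc).
have aDV : a \notin D :&: V by rewrite inE (negbTE aV) andbF.
case Ho: (odd (#|D| * k + #|D :&: V|)).
  exists (c |: V); rewrite cardsU1 cV HVc E2; split; first by lia.
  by have -> : (1 + k.-1 = k)%N by lia.
exists (a |: V); rewrite cardsU1 aV HVc E1 cardsU1 aDV.
have -> : (1 + k.-1 = k)%N by lia.
split => //; by rewrite add1n addnS /= Ho.
Qed.

Lemma mulI_l Z : mul (blade setT) Z = mul (alph n.+1 Z) (blade setT).
Proof.
apply/ffunP => D; rewrite mul_blade_l mul_blade_r ffunE.
set E := sd setT D.
have H := bsign_swap setT E.
rewrite cardsT card_ord setTI in H.
have -> : s setT E = (-1) ^+ (n.+1 * #|E|) * s E setT.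
  transitivity (s setT E * (s E setT * s E setT)); first by rewrite bsign2 mulr1.
  by rewrite mulrA H mulSn addnC.
ring.
Qed.

Lemma mulII : mul (blade setT) (blade setT) = sc (s setT setT) (clone F n).
Proof.
apply/ffunP => D; rewrite mul_blade_r !ffunE.
case: (eqVneq D set0) => [->|HD].
  by rewrite sdC sd0 eqxx mul1r mulr1.
have -> : (sd setT D == setT) = false.
  apply/eqP => E; have : sd setT D = sd setT set0 by rewrite E sdC sd0.
  by move/sd_inj => E2; rewrite E2 eqxx in HD.
by rewrite mul0r mulr0.
Qed.

Lemma grade_mulI m Y : grade m Y -> (m <= n)%N -> grade (n - m) (mul Y (blade setT)).
Proof.
move=> H hm D HD; rewrite mul_blade_r H ?mul0r //.
rewrite sdT cardsCs setCK card_ord.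
have hD : (#|D| <= n)%N by have := max_card D; rewrite card_ord.
apply/eqP => E; move/eqP: HD; lia.
Qed.

Lemma sdd A : sd A A = set0.
Proof. by apply/setP => x; rewrite in_symdiff addbb inE. Qed.

Lemma dual k U : (1 <= k)%N -> (k <= n.-1)%N -> Gamma eta k U -> Gamma eta (n - k) U.
Proof.
move=> k1 kn [S [[US SU] HG]].
exists S; split; first by [].
have n0 : (0 < n)%N by lia.
have Tne0 : (setT : {set 'I_n}) != set0.
  by apply/set0Pn; exists (Ordinal n0); rewrite inE.
have A2 : forall X, grade k X -> mul (mul (alph n.+1 U) X) (alph n.+1 S) = mul (mul U X) S.
  move=> X gX; have gY := HG X gX.
  have := alph_grade n.+1 gY.
  rewrite !alph_mul (alph_grade n.+1 gX) mulscr mulscl => E.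
  have := congr1 (sc ((-1) ^+ (n.+1 * k))) E.
  by rewrite !scsc sgnm2 !sc1.
have A2' : forall X Z, grade k X -> mul (alph n.+1 U) (mul X (mul (alph n.+1 S) Z)) = mul U (mul X (mul S Z)).
  by move=> X Z gX; rewrite -!clmulA A2.
have aSU : mul (alph n.+1 S) (alph n.+1 U) = clone F n by rewrite -alph_mul SU alph_clone.
have aUS : mul (alph n.+1 U) (alph n.+1 S) = clone F n by rewrite -alph_mul US alph_clone.
set W := mul S (alph n.+1 U).
have A3 : forall X, grade k X -> mul W X = mul X W.
  move=> X gX; rewrite /W -[mul (mul S _) X]mulc1 -aSU !clmulA A2' //.
  by rewrite -(clmulA S U) SU mul1c.
have A4 : forall D, D != set0 -> D != setT -> W D = 0.
  move=> D H0 HT; have [B [HB Ho]] := exists_odd_B k1 kn H0 HT.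
  apply: (@central_coord W k _ D B HB Ho) => B' HB'; apply: A3.
  by rewrite -HB'; exact: grade_blade.
have aW : alph n.+1 W = W.
  apply/ffunP => D; rewrite ffunE.
  case: (eqVneq D set0) => [->|H0]; first by rewrite cards0 muln0 expr0 mul1r.
  case: (eqVneq D setT) => [->|HT]; last by rewrite A4 // mulr0.
  by rewrite cardsT card_ord -signr_odd oddM /= andNb expr0 mul1r.
have WW : mul W W = clone F n.
  rewrite -{1}aW /W alph_mul alphK !clmulA -(clmulA U S) US mul1c.
  exact: aSU.
have UW : mul U W = alph n.+1 U by rewrite /W -clmulA US mul1c.
clearbody W.
have Wb : W setT = 0.
  case: (eqVneq (W setT) 0) => // Hb; exfalso.
  have := congr1 (fun f : cl F n => f setT) WW => /=.
  rewrite clmulE ffunE (negbTE Tne0) (bigD1 set0) //= (bigD1 setT) //= big1; last first.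
    move=> A /andP [HA0 HAT]; by rewrite A4 // !mul0r.
  rewrite sd0 sdd bsign0l bsign0r addr0 !mulr1 (mulrC (W setT)) -mulr2n => H.
  have Wa : W set0 = 0.
    apply/eqP; move/eqP: H; rewrite -mulr_natr mulf_eq0 (negbTE two) orbF.
    by rewrite mulf_eq0 (negbTE Hb) orbF.
  have EW : W = sc (W setT) (blade setT).
    apply/ffunP => D; rewrite !ffunE.
    case: (eqVneq D setT) => [->|HT]; first by rewrite mulr1.
    case: (eqVneq D set0) => [->|H0]; first by rewrite /= Wa mulr0.
    by rewrite /= A4 // mulr0.
  have := mulI_l U; rewrite -UW EW mulscr mulscl clmulA mulII mulscr mulc1 => HIU.
  have := congr1 (fun X => mul X S) HIU => /=.
  rewrite clmulA US mulc1 !mulscl US => HI.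
  have := congr1 (fun f : cl F n => f setT) HI => /=.
  by rewrite !ffunE eqxx (negbTE Tne0) !mulr0 => /eqP; rewrite oner_eq0.
set a := W set0.
have EW : W = sc a (clone F n).
  apply/ffunP => D; rewrite !ffunE.
  case: (eqVneq D set0) => [->|H0]; first by rewrite mulr1.
  case: (eqVneq D setT) => [->|HT]; first by rewrite Wb /= ?(negbTE Tne0) mulr0.
  by rewrite /= ?(negbTE H0) A4 // mulr0.
have aU : alph n.+1 U = sc a U by rewrite -UW EW mulscr mulc1.
have Hc : sc a (mul U (alph n.+1 S)) = clone F n by rewrite -mulscl -aU.
have a0 : a != 0.
  apply/eqP => E; have := congr1 (fun f : cl F n => f set0) Hc => /=.
  by rewrite !ffunE E mul0r eqxx => /eqP; rewrite eq_sym oner_eq0.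
have aS : alph n.+1 S = sc a^-1 S.
  have H2 : mul U (alph n.+1 S) = sc a^-1 (clone F n).
    by rewrite -Hc scsc mulVf // sc1.
  by rewrite -[alph n.+1 S]mul1c -SU clmulA H2 mulscr mulc1.
have A9 : forall X, grade k X -> grade k (mul (mul U X) (alph n.+1 S)).
  by move=> X gX; rewrite aS mulscr; apply: grade_sc; apply: HG.
move=> X' gX'.
set c := s setT setT.
set X := sc c (mul X' (blade setT)).
have gX : grade k X.
  apply: grade_sc; have := grade_mulI gX' (leq_subr k n).
  by rewrite subKn //; lia.
have EX : X' = mul X (blade setT).
  by rewrite /X mulscl clmulA mulII mulscr mulc1 scsc bsign2 sc1.
rewrite EX.
have -> : mul (mul U (mul X (blade setT))) S = mul (mul (mul U X) (alph n.+1 S)) (blade setT).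
  by rewrite !clmulA mulI_l.
apply: grade_mulI; [exact: A9 | lia].
Qed.

End Gen.

Lemma gen_iff (F : fieldType) (n : nat) (eta : 'I_n -> F) :
  (forall i, eta i * eta i = 1) -> (2%:R : F) != 0 ->
  forall k, (1 <= k <= n.-1)%N -> forall T : cl F n,
  Gamma eta k T <-> Gamma eta (n - k) T.
Proof.
move=> e2 two k /andP [k1 kn] T; split; first exact: dual.
move=> H; have := @dual F n eta e2 two (n - k) T ltac:(lia) ltac:(lia) H.
by rewrite subKn //; lia.
Qed.

Theorem mainTheorem13 :
  (forall (R : realType) (p q : nat), (2 <= p + q)%N ->
     forall k : nat, (1 <= k <= (p + q).-1)%N ->
     forall T : cl R (p + q),
       Gamma (@eta_pq R p q) k T <-> Gamma (@eta_pq R p q) (p + q - k) T)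
  /\
  (forall (R : realType) (n : nat), (2 <= n)%N ->
     forall k : nat, (1 <= k <= n.-1)%N ->
     forall T : cl (R[i]) n,
       Gamma (@eta_C R n) k T <-> Gamma (@eta_C R n) (n - k) T).
Proof.
split.
- move=> R p q _; apply: gen_iff; last by rewrite pnatr_eq0.
  by move=> i; rewrite /eta_pq; case: ifP; rewrite ?mulr1 ?mulrNN ?mulr1.
- move=> R n _; apply: gen_iff; last by rewrite pnatr_eq0.
  by move=> i; rewrite /eta_C mulr1.
Qed.
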